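(* Let $\mathbf{b}\in H_{1,2,2}$ have odd norm. Then there exist units $\mathbf{u},\mathbf{u}_1$ of $H_{1,2,2}$ such that $\mathbf{b}\mathbf{u}\equiv\mathbf{u}_1\mathbf{b}\equiv 1 \pmod 2$, i.e. $\mathbf{b}\mathbf{u}-1\in 2H_{1,2,2}$ and $\mathbf{u}_1\mathbf{b}-1\in 2H_{1,2,2}$.
   Context: Let $\mathbf{i},\mathbf{j},\mathbf{k}$ be the standard quaternion units; $\overline{\mathbf{q}}$ is quaternion conjugation and $N(\mathbf{q})=\mathbf{q}\overline{\mathbf{q}}$. $H_{1,2,2}$ is the subring of the quaternions equal to the $\mathbb{Z}$-module generated by $\mathbf{v}_1=1$, $\mathbf{v}_2=\mathbf{i}$, $\mathbf{v}_3=\tfrac12(1+\mathbf{i}+\sqrt2\,\mathbf{j})$, $\mathbf{v}_4=\tfrac12(1+\mathbf{i}+\sqrt2\,\mathbf{k})$. A unit is an element invertible in $H_{1,2,2}$ (equivalently of norm 1). *)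

(* Defs.v *)
(* Quaternions over a real closed field R (which contains sqrt 2). *)
From HB Require Import structures.
From mathcomp Require Import all_boot all_order all_algebra.
Set Implicit Arguments. Unset Strict Implicit. Unset Printing Implicit Defensive.
Import Order.TTheory GRing.Theory Num.Theory.
Local Open Scope ring_scope.

Section Quat.
Variable R : rcfType.

Record quat := Quat { q0 : R; q1 : R; q2 : R; q3 : R }.

Definition qadd (a b : quat) : quat :=
  Quat (q0 a + q0 b) (q1 a + q1 b) (q2 a + q2 b) (q3 a + q3 b).

(* Hamilton product with i^2 = j^2 = k^2 = ijk = -1 *)
Definition qmul (a b : quat) : quat :=
  Quat (q0 a * q0 b - q1 a * q1 b - q2 a * q2 b - q3 a * q3 b)
       (q0 a * q1 b + q1 a * q0 b + q2 a * q3 b - q3 a * q2 b)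
       (q0 a * q2 b - q1 a * q3 b + q2 a * q0 b + q3 a * q1 b)
       (q0 a * q3 b + q1 a * q2 b - q2 a * q1 b + q3 a * q0 b).

Definition qscale (c : R) (a : quat) : quat :=
  Quat (c * q0 a) (c * q1 a) (c * q2 a) (c * q3 a).

Definition qreal (c : R) : quat := Quat c 0 0 0.
Definition qone : quat := qreal 1.
Definition qi : quat := Quat 0 1 0 0.
Definition qj : quat := Quat 0 0 1 0.
Definition qk : quat := Quat 0 0 0 1.

Definition qconj (a : quat) : quat := Quat (q0 a) (- q1 a) (- q2 a) (- q3 a).
Definition qN (a : quat) : quat := qmul a (qconj a).

Definition qsub (a b : quat) : quat := qadd a (qscale (-1) b).

(* Z-basis of H_{1,2,2} *)
Definition v1 : quat := qone.
Definition v2 : quat := qi.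
Definition v3 : quat :=
  qscale (2^-1) (qadd (qadd qone qi) (qscale (Num.sqrt 2) qj)).
Definition v4 : quat :=
  qscale (2^-1) (qadd (qadd qone qi) (qscale (Num.sqrt 2) qk)).

Definition inH (q : quat) : Prop :=
  exists a b c d : int,
    q = qadd (qadd (qscale a%:~R v1) (qscale b%:~R v2))
             (qadd (qscale c%:~R v3) (qscale d%:~R v4)).

Definition in2H (q : quat) : Prop := exists h, inH h /\ q = qscale 2 h.

Definition unitH (u : quat) : Prop :=
  inH u /\ exists v, inH v /\ qmul u v = qone /\ qmul v u = qone.

Definition odd_norm (b : quat) : Prop :=
  exists n : nat, odd n /\ qN b = qreal n%:R.

End Quat.

(* Main.v *)
Require Import Defs.
From mathcomp Require Import all_boot all_order all_algebra.
From mathcomp Require Import zify ring lra.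
Import Order.TTheory GRing.Theory Num.Theory.
Local Open Scope ring_scope.

Section S.
Variable R : rcfType.
Definition hR : R := Num.sqrt 2 / 2.
Lemma hh (x y : R) : (x * hR) * (y * hR) = x * y / 2.
Proof.
have s2 : Num.sqrt (2:R) ^+ 2 = 2 by rewrite sqr_sqrtr // ler0n.
rewrite /hR; rewrite mulrACA -[Num.sqrt 2 / 2 * (Num.sqrt 2 / 2)]mulrACA -expr2 s2.
by field.
Qed.

Definition emb (a b c d : int) : quat R :=
  qadd (qadd (qscale a%:~R (v1 R)) (qscale b%:~R (v2 R)))
       (qadd (qscale c%:~R (v3 R)) (qscale d%:~R (v4 R))).

Lemma embE a b c d : emb a b c d =
  Quat (a%:~R + (c%:~R + d%:~R)/2) (b%:~R + (c%:~R + d%:~R)/2) (c%:~R * hR) (d%:~R * hR).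
Proof. rewrite /emb /qadd /qscale /v1 /v2 /v3 /v4 /qone /qreal /qi /qj /qk /hR /=.
by congr Quat; field. Qed.

Definition nrm (a b c d : int) : int := a*a+b*b+(c+d)*(a+b)+c*c+c*d+d*d.

Lemma mul_emb a b c d e f g k :
  qmul (emb a b c d) (emb e f g k) =
  emb (a*e - b*f - b*g - c*g - d*f - d*g - d*k)
      (a*f + b*e + b*k + c*f + c*k - d*g)
      (a*g - b*k + c*e + c*g + d*f + d*g)
      (a*k + b*g - c*f + d*e + d*g + d*k).
Proof.
rewrite !embE /qmul /=; congr Quat; rewrite ?hh ?rmorphD ?rmorphB ?rmorphM /=. all: field. all: done.
Qed.

Lemma conj_emb a b c d : qconj (emb a b c d) = emb (a+c+d) (-b) (-c) (-d).
Proof. rewrite !embE /qconj /=; congr Quat; rewrite ?rmorphD ?rmorphN /=; field. all: done. Qed.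

Lemma emb_real n : emb n 0 0 0 = qreal n%:~R.
Proof. rewrite embE /qreal; congr Quat; rewrite /= ?mul0r //; field. all: done. Qed.

Lemma emb_one : qone R = emb 1 0 0 0.
Proof. by rewrite emb_real /qone rmorph1. Qed.

Lemma emb_scale2 a b c d : qscale 2 (emb a b c d) = emb (2*a) (2*b) (2*c) (2*d).
Proof. rewrite !embE /qscale /=; congr Quat; rewrite ?rmorphM /=; field. all: done. Qed.

Lemma emb_sub1 a b c d : qsub (emb a b c d) (qone R) = emb (a-1) b c d.
Proof. rewrite emb_one !embE /qsub /qscale /qadd /=; congr Quat; rewrite ?rmorphB /=; field. all: done. Qed.

Lemma emb_unit x y z t : nrm x y z t = 1 -> unitH (emb x y z t).
Proof.
move=> H; split; first by exists x, y, z, t.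
exists (emb (x+z+t) (-y) (-z) (-t)); split; first by exists (x+z+t), (-y), (-z), (-t).
rewrite !mul_emb emb_one -H /nrm; split; congr emb; ring.
Qed.
End S.

Lemma parity (a b c d k : int) : nrm a b c d = 2*k+1 ->
  exists x y z t w1 w2 w3 w4 : int, nrm x y z t = 1 /\
   x = a+c+d+2*w1 /\ y = -b+2*w2 /\ z = -c+2*w3 /\ t = -d+2*w4.
Proof.
rewrite /nrm.
have [a' [->|->]] : exists a', a = 2*a' \/ a = 2*a'+1 by exists (a %/ 2)%Z; lia.
all: have [b' [->|->]] : exists b', b = 2*b' \/ b = 2*b'+1 by exists (b %/ 2)%Z; lia.
all: have [c' [->|->]] : exists c', c = 2*c' \/ c = 2*c'+1 by exists (c %/ 2)%Z; lia.
all: have [d' [->|->]] : exists d', d = 2*d' \/ d = 2*d'+1 by exists (d %/ 2)%Z; lia.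
all: move=> H; try (exfalso; lia).
1: by exists (-1), (0), (0), (1), (-1 - a' - c' - d'), (0 + b'), (0 + c'), (1 + d'); lia.
1: by exists (-1), (0), (1), (0), (-1 - a' - c' - d'), (0 + b'), (1 + c'), (0 + d'); lia.
1: by exists (0), (0), (-1), (1), (-1 - a' - c' - d'), (0 + b'), (0 + c'), (1 + d'); lia.
1: by exists (0), (-1), (0), (0), (0 - a' - c' - d'), (0 + b'), (0 + c'), (0 + d'); lia.
1: by exists (-1), (-1), (0), (1), (-1 - a' - c' - d'), (0 + b'), (0 + c'), (1 + d'); lia.
1: by exists (-1), (-1), (1), (0), (-1 - a' - c' - d'), (0 + b'), (1 + c'), (0 + d'); lia.
1: by exists (-1), (0), (0), (0), (-1 - a' - c' - d'), (0 + b'), (0 + c'), (0 + d'); lia.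
1: by exists (0), (0), (0), (-1), (-1 - a' - c' - d'), (0 + b'), (0 + c'), (0 + d'); lia.
1: by exists (0), (0), (-1), (0), (-1 - a' - c' - d'), (0 + b'), (0 + c'), (0 + d'); lia.
1: by exists (0), (-1), (0), (1), (-1 - a' - c' - d'), (0 + b'), (0 + c'), (1 + d'); lia.
1: by exists (0), (-1), (1), (0), (-1 - a' - c' - d'), (0 + b'), (1 + c'), (0 + d'); lia.
1: by exists (-1), (-1), (1), (1), (-2 - a' - c' - d'), (0 + b'), (1 + c'), (1 + d'); lia.
Qed.

Theorem corollary9 (R : rcfType) (b : quat R) :
  inH b -> odd_norm b ->
  exists u u1 : quat R,
    unitH u /\ unitH u1 /\
    in2H (qsub (qmul b u) (qone R)) /\
    in2H (qsub (qmul u1 b) (qone R)).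
Proof.
move=> [a1 [a2 [a3 [a4 ->]]]] [n [odd_n Hn]].
rewrite -/(emb _ _ _ _ _) in Hn *.
have HN : nrm a1 a2 a3 a4 = 2 * (n./2)%:Z + 1.
  have E : qmul (emb R a1 a2 a3 a4) (emb R (a1+a3+a4) (-a2) (-a3) (-a4)) = emb R (nrm a1 a2 a3 a4) 0 0 0.
    by rewrite mul_emb /nrm; congr emb; ring.
  move: Hn; rewrite /qN conj_emb E => /(congr1 (@q0 R)).
  rewrite embE /= !mulr0z addr0 mul0r addr0 pmulrn => /intr_inj ->.
  rewrite -{1}(odd_double_half n) odd_n /nrm; lia.
have [x [y [z [t [w1 [w2 [w3 [w4 [Hu [hx [hy [hz ht]]]]]]]]]]]] := parity _ _ _ _ _ HN.
exists (emb R x y z t), (emb R x y z t); split; first exact: emb_unit.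
split; first exact: emb_unit.
split.
- exists (emb R ((n./2)%:Z + (a1*w1 - a2*w2 - a2*w3 - a3*w3 - a4*w2 - a4*w3 - a4*w4))
      (a1*w2 + a2*w1 + a2*w4 + a3*w2 + a3*w4 - a4*w3)
      (a1*w3 - a2*w4 + a3*w1 + a3*w3 + a4*w2 + a4*w3)
      (a1*w4 + a2*w3 - a3*w2 + a4*w1 + a4*w3 + a4*w4)).
  split; first by eexists _, _, _, _.
  rewrite mul_emb emb_sub1 emb_scale2 hx hy hz ht; move: HN; rewrite /nrm => HN.
  congr emb; lia.
- exists (emb R ((n./2)%:Z + (w1*a1 - w2*a2 - w2*a3 - w3*a3 - w4*a2 - w4*a3 - w4*a4))
      (w1*a2 + w2*a1 + w2*a4 + w3*a2 + w3*a4 - w4*a3)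
      (w1*a3 - w2*a4 + w3*a1 + w3*a3 + w4*a2 + w4*a3)
      (w1*a4 + w2*a3 - w3*a2 + w4*a1 + w4*a3 + w4*a4)).
  split; first by eexists _, _, _, _.
  rewrite mul_emb emb_sub1 emb_scale2 hx hy hz ht; move: HN; rewrite /nrm => HN.
  congr emb; lia.
Qed.
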